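(* For every finite abelian $p$-group $H$, $N_{\mathrm{typical}}(H,\mathbb{F}_p)=0$, where $\mathbb{F}_p$ carries the trivial action.
   Context: For a finite abelian group $D$, subgroup $I$ with $D/I$ cyclic and finite $D$-module $M$: $\widehat D:=\hat{\mathbb{Z}}\times_{D/I}D$, $R(D,I,M):=\ker(H^2(D,M)\xrightarrow{\inf}H^2(\widehat D,M))$. $\mathcal{C}$ is the set of pairs $(D,I)$ with $D\le H$ generated by at most two elements, $I\le D$ cyclic with $D/I$ cyclic. $N_{\mathrm{typical}}(H,M):=\ker\bigl(H^2(H,M)\to\bigoplus_{(D,I)\in\mathcal{C}}H^2(D,M)/R(D,I,M)\bigr)$ (restriction maps). *)

(* Defs.v *)
From HB Require Import structures.
From mathcomp Require Import all_boot all_order all_algebra all_fingroup all_solvable.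
Set Implicit Arguments. Unset Strict Implicit. Unset Printing Implicit Defensive.
Import GRing.Theory.
Local Open Scope group_scope.

(* An element of Zhat is a compatible family (x_N)_{N >= 1}, x_N in Z/N;
   the coordinate at modulus k.+1 is [zc x k]. *)
Record zhat := Zhat {
  zc : nat -> nat;
  zc_lt : forall k, (zc k < k.+1)%N;
  zc_compat : forall k l, (k.+1 %| l.+1)%N -> (zc l %% k.+1 = zc k)%N }.

Lemma zadd_lt (a b : zhat) k : ((zc a k + zc b k) %% k.+1 < k.+1)%N.
Proof. by rewrite ltn_mod. Qed.

Lemma zadd_compat (a b : zhat) k l : (k.+1 %| l.+1)%N ->
  (((zc a l + zc b l) %% l.+1) %% k.+1 = (zc a k + zc b k) %% k.+1)%N.
Proof.
move=> kl; rewrite modn_dvdm // -modnDm !zc_compat // modnDm //.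
Qed.

Definition zadd (a b : zhat) : zhat :=
  @Zhat (fun k => (zc a k + zc b k) %% k.+1) (@zadd_lt a b) (@zadd_compat a b).

Section Cohomology.
Local Unset Implicit Arguments.
Variables (gT : finGroupType) (M : zmodType).
(* M is a G-module with trivial action throughout. *)

Definition cocycle2 (G : {set gT}) (f : gT -> gT -> M) : Prop :=
  forall x y z, x \in G -> y \in G -> z \in G ->
    (f y z - f (x * y)%g z + f x (y * z)%g - f x y = 0)%R.

Definition coboundary2 (G : {set gT}) (f : gT -> gT -> M) : Prop :=
  exists g : gT -> M, forall x y, x \in G -> y \in G ->
    f x y = (g y - g (x * y)%g + g x)%R.

(* The fibre product  Dhat = Zhat x_{D/I} D  for the surjection
   Zhat -> D/I,  a |-> c ^+ (a mod n),  n = #|D/I|,  c a generator of D/I. *)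
Definition in_hatD (D I : {set gT}) (c : coset_of I) (a : zhat) (d : gT) : bool :=
  (d \in D) && (coset I d == c ^+ zc a (#|D / I|).-1).

(* continuous (= locally constant, for the profinite topology) 1-cochains
   Dhat -> M, M discrete; by compactness these are exactly the functions
   factoring through some finite level Z/N x_{D/I} D. *)
Definition hat_continuous (D I : {set gT}) (c : coset_of I)
    (g : zhat -> gT -> M) : Prop :=
  exists k, forall a b d, in_hatD D I c a d -> in_hatD D I c b d ->
    zc a k = zc b k -> g a d = g b d.

(* The class of the cocycle f of D lies in
   R(D,I,M) = ker (inf : H^2(D,M) -> H^2(Dhat,M)):
   the inflated cocycle (x,y) |-> f (pi x) (pi y) is a continuous coboundary. *)
Definition in_R (D I : {set gT}) (c : coset_of I) (f : gT -> gT -> M) : Prop :=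
  exists g : zhat -> gT -> M, hat_continuous D I c g /\
    forall a d b e, in_hatD D I c a d -> in_hatD D I c b e ->
      f d e = (g b e - g (zadd a b) (d * e)%g + g a d)%R.

Definition typical_pair (H D I : {group gT}) : Prop :=
  [/\ D \subset H, exists x y, D = <<[set x; y]>> :> {set gT},
      I \subset D, cyclic I & cyclic (D / I)].

(* The class of the cocycle f of H lies in N_typical(H,M): for every
   (D,I) in C, res_D [f] lies in R(D,I,M)  (R computed with a surjection
   Zhat -> D/I given by some generator c of D/I; R does not depend on it). *)
Definition in_Ntypical (H : {group gT}) (f : gT -> gT -> M) : Prop :=
  forall D I : {group gT}, typical_pair H D I ->
    exists c : coset_of I, generator (D / I) c /\ in_R D I c f.

End Cohomology.

Arguments cocycle2 {gT M} G f.
Arguments coboundary2 {gT M} G f.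
Arguments in_hatD {gT} D I c a d.
Arguments hat_continuous {gT M} D I c g.
Arguments in_R {gT M} D I c f.
Arguments typical_pair {gT} H D I.
Arguments in_Ntypical {gT M} H f.

(* Main.v *)
Require Import Defs.
From HB Require Import structures.
From mathcomp Require Import all_boot all_order all_algebra all_fingroup all_solvable.
From mathcomp Require Import ring.
From Stdlib Require Import ProofIrrelevance FunctionalExtensionality.
Import GRing.Theory.
Local Open Scope group_scope.

Section Ext.
Variables (gT : finGroupType) (M : comRingType) (f : gT -> gT -> M).

Lemma ext_step (A B H : {group gT}) (gA gB : gT -> M) :
  A \x B = H -> cocycle2 H f ->
  (forall x y, x \in H -> y \in H -> f x y = f y x) ->
  (forall x y, x \in A -> y \in A -> f x y = (gA y - gA (x * y)%g + gA x)%R) ->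
  (forall x y, x \in B -> y \in B -> f x y = (gB y - gB (x * y)%g + gB x)%R) ->
  coboundary2 H f.
Proof.
move=> eqH coc sym hA hB.
have [_ mulAB cAB tiAB] := dprodP eqH.
exists (fun x => gA (divgr A B x) + gB (remgr A B x) - f (divgr A B x) (remgr A B x))%R.
move=> x y Hx Hy.
have sAH : A \subset H by rewrite -mulAB mulG_subl.
have sBH : B \subset H by rewrite -mulAB mulG_subr.
have Hx' : x \in (A * B) by rewrite mulAB.
have Hy' : y \in (A * B) by rewrite mulAB.
have a1A := mem_divgr Hx'; have b1B := mem_remgr Hx'.
have a2A := mem_divgr Hy'; have b2B := mem_remgr Hy'.
move: (divgr A B x) (remgr A B x) (divgr A B y) (remgr A B y) a1A b1B a2A b2B
  (divgr_eq A B x) (divgr_eq A B y) => a1 b1 a2 b2 a1A b1B a2A b2B ex ey.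
have cm : forall a b, a \in A -> b \in B -> commute a b.
  by move=> a b aA bB; apply: commute_sym; apply: (centsP cAB).
have eprod : (x * y = (a1 * a2) * (b1 * b2)).
  by rewrite ex ey -!mulgA (mulgA b1) -(cm _ _ a2A b1B) !mulgA.
rewrite eprod ex ey.
rewrite !divgrMid ?remgrMid ?groupM //.
have HA := fun a (aA : a \in A) => subsetP sAH a aA.
have HB := fun b (bB : b \in B) => subsetP sBH b bB.
have Acoc : forall u v w, u \in H -> v \in H -> w \in H ->
  (f u v + f (u * v)%g w = f v w + f u (v * w)%g)%R.
  move=> u v w uH vH wH; have E := coc u v w uH vH wH.
  apply/eqP; rewrite -subr_eq0 -oppr_eq0; apply/eqP; rewrite -[RHS]E; ring.
have e1 := Acoc (a1 * b1) a2 b2 (groupM (HA _ a1A) (HB _ b1B)) (HA _ a2A) (HB _ b2B).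
have e2 := Acoc a1 b1 a2 (HA _ a1A) (HB _ b1B) (HA _ a2A).
have e3 := Acoc a1 a2 b1 (HA _ a1A) (HA _ a2A) (HB _ b1B).
have e4 := Acoc (a1 * a2) b1 b2 (groupM (HA _ a1A) (HA _ a2A)) (HB _ b1B) (HB _ b2B).
have s := sym b1 a2 (HB _ b1B) (HA _ a2A).
have c1 : a1 * b1 * a2 = a1 * a2 * b1 by rewrite -!mulgA (cm _ _ a2A b1B).
have c2 : b1 * a2 = a2 * b1 by rewrite (cm _ _ a2A b1B).
rewrite c1 in e1; rewrite c2 s in e2.
rewrite (hA a1 a2) // in e3; rewrite (hB b1 b2) // in e4.
apply/eqP; rewrite -subr_eq0; apply/eqP.
move/eqP: e1; rewrite -subr_eq0 => /eqP e1.
move/eqP: e2; rewrite -subr_eq0 => /eqP e2.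
move/eqP: e3; rewrite -subr_eq0 => /eqP e3.
move/eqP: e4; rewrite -subr_eq0 => /eqP e4.
match goal with e1: ?X1 = 0%R, e2 : ?X2 = 0%R, e3: ?X3 = 0%R, e4: ?X4 = 0%R |- ?G = _ =>
  have K : G = (-X1 - X2 + X3 + X4)%R by ring end.
by rewrite K e1 e2 e3 e4 !subr0 oppr0 !addr0.
Qed.

Lemma ext_big (b : seq gT) : forall H : {group gT},
  \big[dprod/1]_(x <- b) <[x]> = H -> cocycle2 H f ->
  (forall x y, x \in H -> y \in H -> f x y = f y x) ->
  (forall h, h \in H -> exists g : gT -> M,
     forall x y, x \in <[h]> -> y \in <[h]> -> f x y = (g y - g (x * y)%g + g x)%R) ->
  coboundary2 H f.
Proof.
elim: b => [|h b IH] H.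
  rewrite big_nil => eqH _ _ _; exists (fun _ => f 1 1) => x y.
  rewrite -eqH !inE => /eqP -> /eqP ->.
  by rewrite subrr add0r.
rewrite big_cons => eqH coc sym cyc.
have [[K B eqK eqB] mulAB cAB tiAB] := dprodP eqH.
have eqH' : (<[h]> \x B) = H by rewrite -eqB.
have sBH : (B \subset H) by rewrite -mulAB -eqB mulG_subr.
have hH : h \in H.
  by rewrite -mulAB eqB; apply: (subsetP (mulG_subl B _)); exact: cycle_id.
have [gA hA] := cyc h hH.
have cobB : coboundary2 B f.
  apply: IH.
  - by rewrite eqB.
  - by move=> x y z xB yB zB; apply: coc; apply: (subsetP sBH).
  - by move=> x y xB yB; apply: sym; apply: (subsetP sBH).
  - move=> z zB; apply: cyc; exact: (subsetP sBH).
have [gB hB] := cobB.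
have eqH'' : (<[h]>%G \x B) = H by [].
exact: (@ext_step _ _ _ _ _ eqH'' coc sym hA hB).
Qed.
End Ext.

Lemma zhat_eq (a b : zhat) : (forall k, zc a k = zc b k) -> a = b.
Proof.
case: a => za la ca; case: b => zb lb cb /= E.
have e : za = zb by apply: functional_extensionality.
subst zb; f_equal; apply: proof_irrelevance.
Qed.

Lemma zaddC (a b : zhat) : zadd a b = zadd b a.
Proof. by apply: zhat_eq => k /=; rewrite addnC. Qed.

Lemma zconst_lt (m k : nat) : (m %% k.+1 < k.+1)%N.
Proof. by rewrite ltn_mod. Qed.

Lemma zconst_compat (m : nat) k l : (k.+1 %| l.+1)%N -> ((m %% l.+1) %% k.+1 = m %% k.+1)%N.
Proof. by move=> kl; rewrite modn_dvdm. Qed.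

Definition zconst (m : nat) : zhat := @Zhat (fun k => m %% k.+1) (zconst_lt m) (@zconst_compat m).

Lemma hat_lift (gT : finGroupType) (D I : {group gT}) (c : coset_of I) d :
  generator (D / I) c -> d \in D -> exists a, in_hatD D I c a d.
Proof.
move=> gen dD.
have : coset I d \in <[c]> by rewrite -(eqP gen) mem_quotient.
case/cycleP => m em.
exists (zconst m); rewrite /in_hatD dD /= (eqP gen) -orderE.
by rewrite prednK ?order_gt0 // expg_mod_order em.
Qed.

Theorem mainTheorem13 (gT : finGroupType) (p : nat) (H : {group gT}) :
  prime p -> abelian H -> (p.-group H)%g ->
  forall f : gT -> gT -> 'F_p,
    cocycle2 H f -> in_Ntypical H f -> coboundary2 H f.
Proof.
move=> _ abH _ f coc hN.
have sym : forall x y, x \in H -> y \in H -> f x y = f y x.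
  move=> x y xH yH.
  pose D := <<[set x; y]>>%G; pose I := <[x]>%G.
  have sDH : D \subset H by rewrite gen_subG subUset !sub1set xH yH.
  have xD : x \in D by rewrite mem_gen // !inE eqxx.
  have yD : y \in D by rewrite mem_gen // !inE eqxx orbT.
  have nI : <[y]> \subset 'N(I).
    apply: subset_trans (sub_abelian_norm abH _); first by rewrite cycle_subG.
    by rewrite cycle_subG.
  have tp : typical_pair H D I.
    split => //; first by exists x, y.
    - by rewrite cycle_subG.
    - exact: cycle_cyclic.
    apply: (@cyclicS _ (<[y]> / I)%G); last exact: quotient_cyclic (cycle_cyclic y).
    suff : D / I \subset <[y]> / I by []. rewrite -(quotientYidl nI); apply: quotientS.
    rewrite gen_subG subUset !sub1set.
    rewrite (subsetP (joing_subl _ _)) ?cycle_id //.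
    by rewrite (subsetP (joing_subr _ _)) ?cycle_id.
  have [c [gen [g [_ hg]]]] := hN D I tp.
  have [a ha] := @hat_lift _ D I c _ gen xD.
  have [b hb] := @hat_lift _ D I c _ gen yD.
  rewrite (hg _ _ _ _ ha hb) (hg _ _ _ _ hb ha) zaddC.
  have -> : (y * x = x * y)%g by apply: (centsP abH) => //.
  by rewrite addrC addrA addrAC.
apply: (@ext_big gT _ f (sval (abelian_structure abH)) H).
- exact: (s2valP (abelian_structure abH)).
- exact: coc.
- exact: sym.
move=> x xH.
pose D := <<[set x; x]>>%G.
have eD : D = <[x]>%G by apply: val_inj; rewrite /= setUid.
have sDH : D \subset H by rewrite eD cycle_subG.
have tp : typical_pair H D D.
  split => //; first by exists x, x.
  - by rewrite eD cycle_cyclic.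
  by apply: quotient_cyclic; rewrite eD cycle_cyclic.
have [c [gen [g [_ hg]]]] := hN D D tp.
exists (g (zconst 0)) => u v uX vX.
have hz : forall d, d \in D -> in_hatD D D c (zconst 0) d.
  by move=> d dD; rewrite /in_hatD dD coset_id //= mod0n expg0.
have eD' : <[x]> = D :> {set gT} by rewrite eD.
rewrite eD' in uX vX.
rewrite (hg _ _ _ _ (hz _ uX) (hz _ vX)).
have -> : zadd (zconst 0) (zconst 0) = zconst 0 by apply: zhat_eq => k /=; rewrite !mod0n.
done.
Qed.
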